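(* Let $G$ be a graph and $U \subseteq V(G)$. Suppose $G$ has a minor with countable branch sets which is a barricade with bipartition $(A,B)$ such that for every $b\in B$ the branch set of $b$ contains a vertex of $U$. Then $G$ has a $U$-rooted minor with countable branch sets that is a barricade.
   Context: A barricade is a bipartite graph with bipartition $(A,B)$ such that $|A|<|B|$ and every vertex of $B$ has infinitely many neighbours in $A$. Minors are given by disjoint connected branch sets; a minor is $U$-rooted if every branch set contains a vertex of $U$. *)

(* Defs.v *)
From Stdlib Require Import List Relations.
Set Implicit Arguments.

Definition simple_graph (V : Type) (adj : V -> V -> Prop) : Prop :=
  (forall x y, adj x y -> adj y x) /\ (forall x, ~ adj x x).

Definition card_le (V W : Type) (A : V -> Prop) (B : W -> Prop) : Prop :=
  exists f : {x | A x} -> {y | B y}, forall u v, f u = f v -> u = v.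
Definition card_lt (V W : Type) (A : V -> Prop) (B : W -> Prop) : Prop :=
  card_le A B /\ ~ card_le B A.

Definition finite_set (V : Type) (S : V -> Prop) : Prop :=
  exists l : list V, forall x, S x -> In x l.

(* countable = finite or countably infinite *)
Definition countable_set (V : Type) (S : V -> Prop) : Prop :=
  exists f : V -> nat, forall x y, S x -> S y -> f x = f y -> x = y.

(* S induces a connected subgraph (S is also required nonempty in minor_model) *)
Definition connected_in (V : Type) (adj : V -> V -> Prop) (S : V -> Prop) : Prop :=
  forall x y, S x -> S y ->
    clos_refl_trans V (fun u v => S u /\ S v /\ adj u v) x y.

(* br w is the branch set of the vertex w of H in G. *)
Definition minor_model (V W : Type) (adjG : V -> V -> Prop) (adjH : W -> W -> Prop)
  (br : W -> V -> Prop) : Prop :=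
  (forall w, exists v, br w v) /\
  (forall w1 w2 v, br w1 v -> br w2 v -> w1 = w2) /\
  (forall w, connected_in adjG (br w)) /\
  (forall w1 w2, adjH w1 w2 -> exists v1 v2, br w1 v1 /\ br w2 v2 /\ adjG v1 v2).

Definition rooted (V W : Type) (U : V -> Prop) (br : W -> V -> Prop) : Prop :=
  forall w, exists u, U u /\ br w u.

Definition barricade (W : Type) (adjH : W -> W -> Prop) (A B : W -> Prop) : Prop :=
  (forall w, A w \/ B w) /\ (forall w, ~ (A w /\ B w)) /\
  (forall x y, adjH x y -> (A x /\ B y) \/ (B x /\ A y)) /\
  card_lt A B /\
  (forall b, B b -> ~ finite_set (fun a => A a /\ adjH a b)).

Definition is_barricade (W : Type) (adjH : W -> W -> Prop) : Prop :=
  exists A B : W -> Prop, barricade adjH A B.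

(* Main.v *)
Require Import Defs.
From Stdlib Require Import List Relations Classical ClassicalEpsilon ProofIrrelevance Lia.

Module ZornM.
From mathcomp Require Import all_boot classical_sets boolp.
Local Open Scope classical_set_scope.
Lemma zorn_sets (T : Type) (P : (T -> Prop) -> Prop) :
  (forall F : (T -> Prop) -> Prop, (forall X, F X -> P X) ->
     (forall X Y, F X -> F Y -> (forall z, X z -> Y z) \/ (forall z, Y z -> X z)) ->
     P (fun z => exists X, F X /\ X z)) ->
  exists M, P M /\ forall N, P N -> (forall z, M z -> N z) -> forall z, N z -> M z.
Proof.
move=> H.
have H' : forall F : set (set T), F `<=` P -> total_on F subset -> P (\bigcup_(X in F) X).
{ move=> F FP Ftot.
  have -> : (\bigcup_(X in F) X) = (fun z => exists X, F X /\ X z).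
  { apply/funext => z; apply/propext; split; [by case=> X FX Xz; exists X | by case=> X [FX Xz]; exists X]. }
  apply: H; first by [].
  move=> X Y FX FY; case: (Ftot X Y FX FY) => h; [left|right] => z; exact: h. }
have [M [PM Mmax]] := @Zorn_bigcup T P H'.
exists M; split; first by [].
move=> N PN MN z Nz.
apply: NNPP => nMz.
apply: (Mmax N); last by [].
split; first by [].
move=> NM; exact: nMz (NM z Nz).
Qed.
End ZornM.

Lemma sig_eq_pi (T : Type) (P : T -> Prop) (u v : {x | P x}) :
  proj1_sig u = proj1_sig v -> u = v.
Proof.
  destruct u as [x p], v as [y q]; simpl; intro E; subst y.
  f_equal; apply proof_irrelevance.
Qed.

Lemma card_le_rel (S T : Type) (X : S -> Prop) (Y : T -> Prop) (R : S -> T -> Prop) :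
  (forall x, X x -> exists y, Y y /\ R x y) ->
  (forall x x' y, X x -> X x' -> R x y -> R x' y -> x = x') ->
  card_le X Y.
Proof.
  intros Htot Hinj.
  exists (fun s => let (y, Hy) := constructive_indefinite_description _ (Htot _ (proj2_sig s))
                   in exist Y y (proj1 Hy)).
  intros [u hu] [v hv] E. simpl in E.
  destruct (constructive_indefinite_description _ (Htot u hu)) as [y1 [Y1 R1]].
  destruct (constructive_indefinite_description _ (Htot v hv)) as [y2 [Y2 R2]].
  apply (f_equal (@proj1_sig _ _)) in E. simpl in E. subst y2.
  apply sig_eq_pi; simpl. apply (Hinj u v y1); auto.
Qed.

Lemma card_compare (S T : Type) (X : S -> Prop) (Y : T -> Prop) :
  card_le X Y \/ card_le Y X.
Proof.
  pose (P := fun (R : S * T -> Prop) =>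
    (forall p, R p -> X (fst p) /\ Y (snd p)) /\
    (forall x y y', R (x,y) -> R (x,y') -> y = y') /\
    (forall x x' y, R (x,y) -> R (x',y) -> x = x')).
  destruct (ZornM.zorn_sets _ P) as [M [[M1 [M2 M3]] Mmax]].
  - intros F FP Fch. split; [|split].
    + intros p [Z [FZ Zp]]. exact (proj1 (FP Z FZ) p Zp).
    + intros x y y' [Z [FZ Zp]] [Z' [FZ' Zp']].
      destruct (Fch Z Z' FZ FZ') as [h|h].
      * exact (proj1 (proj2 (FP Z' FZ')) x y y' (h _ Zp) Zp').
      * exact (proj1 (proj2 (FP Z FZ)) x y y' Zp (h _ Zp')).
    + intros x x' y [Z [FZ Zp]] [Z' [FZ' Zp']].
      destruct (Fch Z Z' FZ FZ') as [h|h].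
      * exact (proj2 (proj2 (FP Z' FZ')) x x' y (h _ Zp) Zp').
      * exact (proj2 (proj2 (FP Z FZ)) x x' y Zp (h _ Zp')).
  - destruct (classic (forall x, X x -> exists y, M (x,y))) as [Hall|Hn].
    + left. apply card_le_rel with (R := fun x y => M (x,y)).
      * intros x Xx. destruct (Hall x Xx) as [y My]. exists y.
        split; [exact (proj2 (M1 _ My))|exact My].
      * intros x x' y _ _ h h'. exact (M3 _ _ _ h h').
    + right. apply not_all_ex_not in Hn. destruct Hn as [x0 Hx0].
      apply imply_to_and in Hx0. destruct Hx0 as [Xx0 Nx0].
      apply card_le_rel with (R := fun y x => M (x,y)).
      * intros y Yy. apply NNPP. intro Ny.
        pose (M' := fun p => M p \/ p = (x0,y)).
        assert (PM' : P M').
        { split; [|split].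
          - intros p [h|h]. apply M1; auto. subst p; simpl; auto.
          - intros x a a' [h|h] [h'|h'].
            + eauto.
            + injection h' as -> ->. exfalso. apply Nx0. exists a. exact h.
            + injection h as -> ->. exfalso; apply Nx0; eauto.
            + injection h as -> ->; injection h' as ->; reflexivity.
          - intros a a' b [h|h] [h'|h'].
            + eauto.
            + injection h' as -> ->. exfalso; apply Ny; exists a;
              split; [exact (proj1 (M1 _ h))| exact h].
            + injection h as -> ->. exfalso; apply Ny; exists a';
              split; [exact (proj1 (M1 _ h'))| exact h'].
            + injection h as -> ->; injection h' as ->; reflexivity. }
        assert (M (x0,y)) by
          (apply (Mmax M' PM'); [intros z hz; left; exact hz | right; reflexivity]).
        apply Nx0. exists y. assumption.
      * intros y y' x _ _ h h'. exact (M2 _ _ _ h h').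
Qed.

Lemma crt_mono V (adj : V -> V -> Prop) (S1 S : V -> Prop) x y : (forall v, S1 v -> S v) ->
  clos_refl_trans V (fun u v => S1 u /\ S1 v /\ adj u v) x y ->
  clos_refl_trans V (fun u v => S u /\ S v /\ adj u v) x y.
Proof.
  intros H C. induction C as [u v [a [b c]]| u | u v w _ IH1 _ IH2].
  - apply rt_step. auto.
  - apply rt_refl.
  - eapply rt_trans; eauto.
Qed.

Lemma crt_sym V (adj : V -> V -> Prop) S x y : (forall u v, adj u v -> adj v u) ->
  clos_refl_trans V (fun u v => S u /\ S v /\ adj u v) x y ->
  clos_refl_trans V (fun u v => S u /\ S v /\ adj u v) y x.
Proof.
  intros Hs C. induction C as [u v [a [b c]]| u | u v w _ IH1 _ IH2].
  - apply rt_step. auto.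
  - apply rt_refl.
  - eapply rt_trans; eauto.
Qed.

Lemma conn3 V (adj : V -> V -> Prop) (S1 S2 S3 : V -> Prop) :
  (forall u v, adj u v -> adj v u) ->
  connected_in adj S1 -> connected_in adj S2 -> connected_in adj S3 ->
  (exists v1 v3, S1 v1 /\ S3 v3 /\ adj v1 v3) ->
  (exists v2 v3, S2 v2 /\ S3 v3 /\ adj v2 v3) ->
  connected_in adj (fun v => S1 v \/ S2 v \/ S3 v).
Proof.
  intros Hs C1 C2 C3 [v1 [v3 [h1 [h3 a13]]]] [w2 [w3 [g2 [g3 a23]]]].
  assert (K : forall x z, (S1 x \/ S2 x \/ S3 x) -> S3 z ->
     clos_refl_trans V (fun u v => (S1 u \/ S2 u \/ S3 u) /\ (S1 v \/ S2 v \/ S3 v) /\ adj u v) x z).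
  { intros x z [Hx|[Hx|Hx]] Hz.
    - apply rt_trans with v1.
      + apply crt_mono with (S1:=S1); [intros; auto|exact (C1 x v1 Hx h1)].
      + apply rt_trans with v3.
        * apply rt_step. auto.
        * apply crt_mono with (S1:=S3); [intros; auto|exact (C3 v3 z h3 Hz)].
    - apply rt_trans with w2.
      + apply crt_mono with (S1:=S2); [intros; auto|exact (C2 x w2 Hx g2)].
      + apply rt_trans with w3.
        * apply rt_step. auto.
        * apply crt_mono with (S1:=S3); [intros; auto|exact (C3 w3 z g3 Hz)].
    - apply crt_mono with (S1:=S3); [intros; auto|exact (C3 x z Hx Hz)]. }
  intros x y Hx Hy. apply rt_trans with v3.
  - apply K; auto.
  - apply crt_sym; auto.
Qed.

Lemma count3 V (S1 S2 S3 : V -> Prop) :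
  countable_set S1 -> countable_set S2 -> countable_set S3 ->
  countable_set (fun v => S1 v \/ S2 v \/ S3 v).
Proof.
  intros [f1 H1] [f2 H2] [f3 H3].
  exists (fun v => if excluded_middle_informative (S1 v) then 3 * f1 v
           else if excluded_middle_informative (S2 v) then 3 * f2 v + 1 else 3 * f3 v + 2).
  intros x y Hx Hy.
  destruct (excluded_middle_informative (S1 x)) as [a1|a1];
  destruct (excluded_middle_informative (S1 y)) as [b1|b1];
  destruct (excluded_middle_informative (S2 x)) as [a2|a2];
  destruct (excluded_middle_informative (S2 y)) as [b2|b2];
  intro E;
  first [ exfalso; lia
        | (apply H1; [assumption|assumption|lia])
        | (apply H2; [assumption|assumption|lia])
        | (apply H3; [tauto|tauto|lia]) ].
Qed.

Theorem lemma5p3 (V : Type) (adj : V -> V -> Prop) (HG : simple_graph adj)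
  (U : V -> Prop)
  (W : Type) (adjH : W -> W -> Prop) (HH : simple_graph adjH)
  (br : W -> V -> Prop) (A B : W -> Prop) :
  minor_model adj adjH br ->
  (forall w, countable_set (br w)) ->
  barricade adjH A B ->
  (forall b, B b -> exists u, U u /\ br b u) ->
  exists (W' : Type) (adjH' : W' -> W' -> Prop) (br' : W' -> V -> Prop),
    simple_graph adjH' /\ minor_model adj adjH' br' /\
    (forall w, countable_set (br' w)) /\ rooted U br' /\ is_barricade adjH'.
Proof.
  intros MM Hc Hbar HU.
  destruct MM as [Mne [Mdis [Mcon Medge]]].
  destruct Hbar as [Bcov [Bdis [Bedge [[Ale Bnle] Binf]]]].
  destruct HG as [Gsym Girr].
  pose (inv := fun (t : (W*W)*W) x => x = fst (fst t) \/ x = snd (fst t) \/ x = snd t).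
  pose (good := fun (t : (W*W)*W) => A (fst (fst t)) /\ A (snd (fst t)) /\ B (snd t) /\
          fst (fst t) <> snd (fst t) /\ adjH (fst (fst t)) (snd t) /\ adjH (snd (fst t)) (snd t)).
  pose (P := fun X : (W*W)*W -> Prop => (forall t, X t -> good t) /\
          (forall t t' x, X t -> X t' -> inv t x -> inv t' x -> t = t')).
  destruct (ZornM.zorn_sets _ P) as [X [[Xg Xd] Xmax]].
  { intros F FP Fch. split.
    - intros t [Z [FZ Zt]]. exact (proj1 (FP Z FZ) t Zt).
    - intros t t' x [Z [FZ Zt]] [Z' [FZ' Zt']] it it'.
      destruct (Fch Z Z' FZ FZ') as [h|h].
      + exact (proj2 (FP Z' FZ') t t' x (h _ Zt) Zt' it it').
      + exact (proj2 (FP Z FZ) t t' x Zt (h _ Zt') it it'). }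
  assert (Xgood : forall t, X t -> A (fst (fst t)) /\ A (snd (fst t)) /\ B (snd t) /\
          fst (fst t) <> snd (fst t) /\ adjH (fst (fst t)) (snd t) /\ adjH (snd (fst t)) (snd t))
    by exact Xg.
  pose (cov := fun x => exists t, X t /\ inv t x).
  assert (Hmax : forall b a a', B b -> ~ cov b -> A a -> ~ cov a -> A a' -> ~ cov a' ->
            a <> a' -> adjH a b -> adjH a' b -> False).
  { intros b a a' Bb nb Aa na Aa' na' ne ab a'b.
    pose (t0 := ((a,a'),b)). pose (X' := fun t => X t \/ t = t0).
    assert (PX' : P X').
    { split.
      - intros t [h|h]. apply Xg; auto. subst t. unfold good, t0; simpl; tauto.
      - intros t t' x [h|h] [h'|h'] it it'.
        + eauto.
        + subst t'. exfalso. unfold inv, t0 in it'; simpl in it'.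
          destruct it' as [e|[e|e]]; subst x; [apply na|apply na'|apply nb]; exists t; auto.
        + subst t. exfalso. unfold inv, t0 in it; simpl in it.
          destruct it as [e|[e|e]]; subst x; [apply na|apply na'|apply nb]; exists t'; auto.
        + subst; reflexivity. }
    assert (Xt0 : X t0) by
      (apply (Xmax X' PX'); [intros z hz; left; exact hz | right; reflexivity]).
    apply nb. exists t0. split; auto. unfold inv, t0; simpl; auto. }
  pose (A' := fun w : ({t | X t} + {b | B b /\ ~ cov b})%type =>
                match w with inl _ => True | inr _ => False end).
  pose (B' := fun w : ({t | X t} + {b | B b /\ ~ cov b})%type =>
                match w with inl _ => False | inr _ => True end).
  pose (adjH' := fun w1 w2 : ({t | X t} + {b | B b /\ ~ cov b})%type =>
     match w1, w2 with
     | inl t, inr b => adjH (fst (fst (proj1_sig t))) (proj1_sig b) \/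
                       adjH (snd (fst (proj1_sig t))) (proj1_sig b)
     | inr b, inl t => adjH (fst (fst (proj1_sig t))) (proj1_sig b) \/
                       adjH (snd (fst (proj1_sig t))) (proj1_sig b)
     | _, _ => False end).
  pose (br' := fun (w : ({t | X t} + {b | B b /\ ~ cov b})%type) v =>
     match w with
     | inl t => br (fst (fst (proj1_sig t))) v \/ br (snd (fst (proj1_sig t))) v \/
                br (snd (proj1_sig t)) v
     | inr b => br (proj1_sig b) v end).
  exists ({t | X t} + {b | B b /\ ~ cov b})%type, adjH', br'.
  split; [|split; [|split; [|split]]].
  -
    split.
    + intros [t|b] [t'|b']; simpl; tauto.
    + intros [t|b]; simpl; tauto.
  -
    split; [|split; [|split]].
    + intros [t|b].
      * destruct (Mne (fst (fst (proj1_sig t)))) as [v hv]. exists v. simpl. auto.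
      * destruct (Mne (proj1_sig b)) as [v hv]. exists v. simpl. auto.
    + assert (Hin : forall (t : {t | X t}) v, br' (inl t) v -> exists x, inv (proj1_sig t) x /\ br x v).
      { intros t v h. simpl in h. unfold inv.
        destruct h as [h|[h|h]]; eexists; split; try exact h; auto. }
      intros [t|b] [t'|b'] v h h'.
      * destruct (Hin t v h) as [x [ix bx]]. destruct (Hin t' v h') as [x' [ix' bx']].
        assert (x = x') by (apply (Mdis x x' v); auto). subst x'.
        f_equal. apply sig_eq_pi. apply (Xd _ _ x (proj2_sig t) (proj2_sig t') ix ix').
      * destruct (Hin t v h) as [x [ix bx]]. simpl in h'.
        assert (x = proj1_sig b') by (apply (Mdis x _ v); auto). subst x.
        exfalso. apply (proj2 (proj2_sig b')). exists (proj1_sig t). split; auto. apply proj2_sig.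
      * destruct (Hin t' v h') as [x [ix bx]]. simpl in h.
        assert (x = proj1_sig b) by (apply (Mdis x _ v); auto). subst x.
        exfalso. apply (proj2 (proj2_sig b)). exists (proj1_sig t'). split; auto. apply proj2_sig.
      * simpl in h, h'. f_equal. apply sig_eq_pi. apply (Mdis _ _ v); auto.
    + intros [t|b]; simpl.
      * destruct (Xgood _ (proj2_sig t)) as [g1 [g2 [g3 [g4 [g5 g6]]]]].
        apply conn3; auto.
      * apply Mcon.
    + intros [t|b] [t'|b'] h; simpl in h; try contradiction.
      * destruct h as [h|h]; destruct (Medge _ _ h) as [v1 [v2 [h1 [h2 h3]]]];
          exists v1, v2; simpl; auto.
      * destruct h as [h|h]; destruct (Medge _ _ h) as [v1 [v2 [h1 [h2 h3]]]];
          exists v2, v1; simpl; auto.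
  -
    intros [t|b]; simpl.
    + apply count3; apply Hc.
    + apply Hc.
  -
    intros [t|b].
    + destruct (Xgood _ (proj2_sig t)) as [g1 [g2 [g3 _]]].
      destruct (HU _ g3) as [u [Uu bu]]. exists u. simpl. auto.
    + destruct (HU _ (proj1 (proj2_sig b))) as [u [Uu bu]]. exists u. simpl. auto.
  -
    exists A', B'.
    assert (NL : ~ card_le B' A').
    { intros [f finj]. apply Bnle.
      apply card_le_rel with (R := fun b a =>
        (exists t, X t /\ snd t = b /\ fst (fst t) = a) \/
        (exists (hb : B b /\ ~ cov b) (t : {t | X t}),
           proj1_sig (f (exist B' (inr (exist _ b hb)) I)) = inl t /\
           snd (fst (proj1_sig t)) = a)).
      - intros b Bb. destruct (classic (cov b)) as [[t [Xt it]]|nc].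
        + destruct (Xgood _ Xt) as [g1 [g2 [g3 [g4 [g5 g6]]]]].
          destruct it as [e|[e|e]].
          * subst b. exfalso. apply (Bdis _ (conj g1 Bb)).
          * subst b. exfalso. apply (Bdis _ (conj g2 Bb)).
          * exists (fst (fst t)). split; auto. left. exists t. auto.
        + destruct (f (exist B' (inr (exist _ b (conj Bb nc))) I)) as [w Aw] eqn:E.
          destruct w as [t|b0]; [|simpl in Aw; contradiction].
          exists (snd (fst (proj1_sig t))). split.
          * exact (proj1 (proj2 (Xgood _ (proj2_sig t)))).
          * right. exists (conj Bb nc), t. rewrite E. simpl. auto.
      - intros b b' a Bb Bb'
          [[t [Xt [e1 e2]]]|[hb [t [Et e]]]] [[t' [Xt' [e1' e2']]]|[hb' [t' [Et' e']]]].
        + assert (t = t') by (apply (Xd t t' a); auto; unfold inv; auto). subst. reflexivity.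
        + assert (t = proj1_sig t') by
            (apply (Xd t _ a Xt (proj2_sig t')); unfold inv; auto). subst t.
          destruct (Xgood _ Xt) as [g1 [g2 [g3 [g4 [g5 g6]]]]]. exfalso. apply g4. congruence.
        + assert (t' = proj1_sig t) by
            (apply (Xd t' _ a Xt' (proj2_sig t)); unfold inv; auto). subst t'.
          destruct (Xgood _ Xt') as [g1 [g2 [g3 [g4 [g5 g6]]]]]. exfalso. apply g4. congruence.
        + assert (t = t').
          { apply sig_eq_pi. apply (Xd _ _ a (proj2_sig t) (proj2_sig t')); unfold inv; auto. }
          subst t'.
          assert (EE : f (exist B' (inr (exist _ b hb)) I) = f (exist B' (inr (exist _ b' hb')) I)).
          { apply sig_eq_pi. rewrite Et, Et'. reflexivity. }
          apply finj in EE.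
          apply (f_equal (fun s : {w | B' w} => match proj1_sig s with
                                  | inr s' => proj1_sig s' | inl _ => b end)) in EE.
          simpl in EE. exact EE. }
    split; [|split; [|split; [|split]]].
    + intros [t|b]; simpl; auto.
    + intros [t|b]; simpl; tauto.
    + intros [t|b] [t'|b'] h; simpl in *; tauto.
    + split; [|exact NL].
      destruct (card_compare _ _ A' B') as [h|h]; [exact h|contradiction].
    + intros w Bw [l Hl]. destruct w as [t|b]; [simpl in Bw; contradiction|].
      pose proof (proj1 (proj2_sig b)) as Bb. pose proof (proj2 (proj2_sig b)) as nc.
      pose (l0 := flat_map (fun w : ({t | X t} + {b | B b /\ ~ cov b})%type =>
               match w with
               | inl t => fst (fst (proj1_sig t)) :: snd (fst (proj1_sig t)) :: nil
               | inr _ => nil end) l).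
      assert (Hcov : forall a, A a -> adjH a (proj1_sig b) -> cov a -> In a l0).
      { intros a Aa adja [t [Xt it]].
        destruct (Xgood _ Xt) as [g1 [g2 [g3 [g4 [g5 g6]]]]].
        destruct it as [e|[e|e]].
        - apply in_flat_map. exists (inl (exist _ t Xt)). split.
          + apply Hl. split; simpl; auto. left. rewrite <- e. exact adja.
          + simpl. auto.
        - apply in_flat_map. exists (inl (exist _ t Xt)). split.
          + apply Hl. split; simpl; auto. right. rewrite <- e. exact adja.
          + simpl. auto.
        - subst a. exfalso. apply (Bdis _ (conj Aa g3)). }
      destruct (classic (exists a0, A a0 /\ adjH a0 (proj1_sig b) /\ ~ cov a0))
        as [[a0 [A0 [adj0 nc0]]]|nex].
      * apply (Binf (proj1_sig b) Bb). exists (a0 :: l0). intros a [Aa adja].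
        destruct (classic (cov a)) as [ca|nca].
        -- right; apply Hcov; auto.
        -- left. destruct (classic (a0 = a)) as [e|ne]; auto.
           exfalso; apply (Hmax (proj1_sig b) a0 a); auto.
      * apply (Binf (proj1_sig b) Bb). exists l0. intros a [Aa adja].
        destruct (classic (cov a)) as [ca|nca].
        -- apply Hcov; auto.
        -- exfalso; apply nex; eauto.
Qed.
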